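(* Let $H\in\mathbb R^{n\times n}$, $f\in\mathbb R^n$, $A\in\mathbb R^{m\times n}$, $b\in\mathbb R^m$, with $\mathcal X=\{x: Ax\le b\}$ nonempty and $H+H^\top$ positive definite. Let $x^*$ be the unique solution of the AVI: find $x\in\mathcal X$ with $(Hx+f)^\top(y-x)\ge0$ for all $y\in\mathcal X$, let $\mathcal A=\{i: A_ix^*=b_i\}$, assume the rows of $A_{\mathcal A}$ are linearly independent, let $\lambda^*$ be the unique vector with $Hx^*+f+A^\top\lambda^*=0$, $0\le\lambda^*\perp b-Ax^*\ge0$, and assume $\lambda^*_i>0$ for all $i\in\mathcal A$. Fix $\rho>0$. Then there is a neighborhood $U$ of $x^*$ such that for all $z\in U$, $\mathcal A_{\mathrm{QP}}(z)=\mathcal A$.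
   Context: $A_i$, $b_i$ are the $i$-th row of $A$ and entry of $b$; $A_{\mathcal S}$ is the submatrix of rows indexed by $\mathcal S$. $H_s=\tfrac12(H+H^\top)$, $\tilde H=\rho I+H_s$, $\tilde f(z)=f+(H-\tilde H)z$. For $z\in\mathbb R^n$, $\mathcal S_x(z)$ is the unique minimizer of the quadratic program $\min_x\tfrac12x^\top\tilde Hx+\tilde f(z)^\top x$ subject to $Ax\le b$, and $\mathcal A_{\mathrm{QP}}(z)=\{i\in\{1,\dots,m\}: A_i\mathcal S_x(z)=b_i\}$ is its active set. *)

(* Defs.v *)
From HB Require Import structures.
From mathcomp Require Import all_boot all_order all_algebra.
From mathcomp Require Import all_classical all_reals all_analysis.
Set Implicit Arguments. Unset Strict Implicit. Unset Printing Implicit Defensive.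
Import Order.TTheory GRing.Theory Num.Theory.
Local Open Scope ring_scope.

Section QPDefs.
Variables (R : realType) (n m : nat).
Implicit Types (H : 'M[R]_n) (A : 'M[R]_(m, n)) (b : 'cV[R]_m) (x y z f : 'cV[R]_n).

Definition qform (x : 'cV[R]_n) (M : 'M[R]_n) (y : 'cV[R]_n) : R := (x^T *m M *m y) 0 0.
Definition dotv (x y : 'cV[R]_n) : R := (x^T *m y) 0 0.

Definition posdef (M : 'M[R]_n) : Prop := forall x : 'cV[R]_n, x != 0 -> 0 < qform x M x.

Definition feasible A b x : Prop := forall i : 'I_m, (A *m x) i 0 <= b i 0.

Definition AVI_sol H f A b x : Prop :=
  feasible A b x /\ forall y, feasible A b y -> 0 <= dotv (H *m x + f) (y - x).

Definition active A b x : {set 'I_m} := [set i | (A *m x) i 0 == b i 0].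

Definition Hsym H : 'M[R]_n := 2^-1 *: (H + H^T).
Definition Htil (rho : R) H : 'M[R]_n := rho%:M + Hsym H.
Definition ftil (rho : R) H f z : 'cV[R]_n := f + (H - Htil rho H) *m z.

Definition QPobj (rho : R) H f z x : R :=
  2^-1 * qform x (Htil rho H) x + dotv (ftil rho H f z) x.

Definition QPmin (rho : R) H f A b z x : Prop :=
  feasible A b x /\ forall y, feasible A b y -> QPobj rho H f z x <= QPobj rho H f z y.

Definition Sx (rho : R) H f A b z : 'cV[R]_n := xget 0 [set x | QPmin rho H f A b z x].

Definition AQP (rho : R) H f A b z : {set 'I_m} := active A b (Sx rho H f A b z).

End QPDefs.

(* Main.v *)
Require Import Defs.
From HB Require Import structures.
From mathcomp Require Import all_boot all_order all_algebra.
From mathcomp Require Import all_classical all_reals all_analysis.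
From mathcomp Require Import lra.
Import Order.TTheory GRing.Theory Num.Theory numFieldNormedType.Exports.
Local Open Scope ring_scope.
Set Implicit Arguments. Unset Strict Implicit.

Lemma near_lin (R : realType) (n p : nat) (N : 'M[R]_(p, n)) (xs : 'cV[R]_n)
  (c : R) (i : 'I_p) : 0 < c -> \forall z \near xs, 0 < c + (N *m (z - xs)) i 0.
Proof.
move=> c0.
set S := \sum_j `|N i j|.
have S0 : 0 <= S by apply: sumr_ge0 => j _.
have d0 : 0 < c / (S + 1) by apply: divr_gt0 => //; lra.
have hj : forall j : 'I_n, \forall z \near (xs : 'cV[R]_n), `|xs j 0 - (z : 'cV[R]_n) j 0| < c / (S + 1).
  move=> j; have := @coord_continuous R n 1 j 0 xs; move/cvgr_dist_lt => /(_ _ d0) /=; exact.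
have hh : \forall z \near (xs : 'cV[R]_n), forall j : 'I_n, `|xs j 0 - (z : 'cV[R]_n) j 0| < c / (S + 1).
  exact: (@filter_forall _ _ (fun j (z : 'cV[R]_n) => `|xs j 0 - z j 0| < c / (S + 1)) (nbhs xs) _ hj).
near=> z. have hz := near hh z.
rewrite mxE.
have hb : `|\sum_j N i j * (z - xs) j 0| <= S * (c / (S + 1)).
  apply: le_trans (ler_norm_sum _ _ _) _.
  rewrite /S mulr_suml; apply: ler_sum => j _.
  rewrite normrM ler_wpM2l //.
  by rewrite !mxE distrC ltW //; apply: hz.
have hS : S * (c / (S + 1)) < c.
  rewrite mulrA ltr_pdivrMr; last lra.
  nra.
move: hb; rewrite ler_norml => /andP [h1 h2].
lra.
Unshelve. all: by end_near.
Qed.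

Lemma qform_tr (R : realType) (n : nat) (x y : 'cV[R]_n) (M : 'M[R]_n) :
  qform x M^T y = qform y M x.
Proof.
rewrite /qform.
have -> : x^T *m M^T *m y = (y^T *m M *m x)^T by rewrite !trmx_mul trmxK mulmxA.
by rewrite mxE.
Qed.

Lemma pd_unit (R : realType) (n : nat) (K : 'M[R]_n) : posdef K -> K \in unitmx.
Proof.
move=> pd; rewrite -row_free_unit -kermx_eq0; apply/rowV0P => v /sub_kermxP vK.
apply/eqP; apply: contraT => v0.
have : v^T != 0 by rewrite trmx_eq0.
move/pd; rewrite /qform trmxK vK mul0mx mxE ltxx.
done.
Qed.

Lemma gram_unit (R : realType) (n k : nat) (K : 'M[R]_n) (B : 'M[R]_(k, n)) :
  posdef K -> row_free B -> (B *m invmx K *m B^T) \in unitmx.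
Proof.
move=> pd rf; have Ku := pd_unit pd.
rewrite -row_free_unit -kermx_eq0; apply/rowV0P => v /sub_kermxP vG.
have uB : v *m B = 0.
  apply/eqP; apply: contraT => u0.
  set u := (v *m B)^T.
  set y := invmx K *m u.
  have uy : u = K *m y by rewrite /y mulKVmx.
  have y0 : y != 0.
    apply: contra u0 => /eqP y0.
    by rewrite -trmx_eq0 -/u uy y0 mulmx0.
  have := pd y y0; rewrite -qform_tr /qform.
  have -> : y^T *m K^T = u^T by rewrite uy [RHS]trmx_mul.
  have -> : u^T *m y = v *m (B *m invmx K *m B^T) *m v^T.
    by rewrite /y /u !trmx_mul !trmxK !mulmxA.
  by rewrite vG mul0mx mxE ltxx.
by apply/eqP; rewrite -(mulmx_free_eq0 _ rf) uB.
Qed.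
Lemma Htil_sym (R : realType) (n : nat) (rho : R) (H : 'M[R]_n) :
  (Htil rho H)^T = Htil rho H.
Proof.
apply/matrixP => i j; rewrite /Htil /Hsym !mxE eq_sym.
by rewrite [H j i + _]addrC.
Qed.

Lemma qform_self_ge0 (R : realType) (n : nat) (x : 'cV[R]_n) : 0 <= (x^T *m x) 0 0.
Proof.
rewrite mxE; apply: sumr_ge0 => i _; rewrite mxE -expr2; exact: sqr_ge0.
Qed.

Lemma mxsE (R : realType) (p q : nat) (a : R) (M : 'M[R]_(p, q)) i j :
  (a *: M) i j = a * M i j.
Proof. by rewrite mxE. Qed.

Lemma Htil_pd (R : realType) (n : nat) (rho : R) (H : 'M[R]_n) :
  0 < rho -> posdef (H + H^T) -> posdef (Htil rho H).
Proof.
move=> r0 pd x x0; have h := pd x x0; rewrite /qform in h *.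
rewrite /Htil /Hsym mulmxDr mulmxDl mul_mx_scalar -scalemxAl -scalemxAr -scalemxAl.
rewrite mxE !mxsE.
have a0 := qform_self_ge0 x.
move: h a0.
set a := (x^T *m x) 0 0; set c := (_ *m _ *m x) 0 0.
move=> c0 a0.
have : 0 <= rho * a by apply: mulr_ge0 => //; exact: ltW.
have : 0 < 2^-1 * c by apply: mulr_gt0.
lra.
Qed.

Lemma mx0E (R : realType) (p q : nat) i j : (0 : 'M[R]_(p, q)) i j = 0.
Proof. by rewrite mxE. Qed.

Lemma mxnE (R : realType) (p q : nat) (M : 'M[R]_(p, q)) i j : (- M) i j = - M i j.
Proof. by rewrite mxE. Qed.

Lemma mxaE (R : realType) (p q : nat) (M N : 'M[R]_(p, q)) i j :
  (M + N) i j = M i j + N i j.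
Proof. by rewrite mxE. Qed.

Lemma mxbE (R : realType) (p q : nat) (M N : 'M[R]_(p, q)) i j :
  (M - N) i j = M i j - N i j.
Proof. by rewrite !mxE. Qed.

Lemma trD (R : realType) (p q : nat) (M N : 'M[R]_(p, q)) :
  (M + N)^T = M^T + N^T.
Proof. by apply/matrixP => i j; rewrite !mxE. Qed.

Lemma kkt_strict (R : realType) (n m : nat) (K : 'M[R]_n) (g : 'cV[R]_n)
  (A : 'M[R]_(m, n)) (b : 'cV[R]_m) (x : 'cV[R]_n) (mu : 'cV[R]_m) :
  K^T = K -> posdef K -> feasible A b x -> (forall i, 0 <= mu i 0) ->
  (forall i, mu i 0 * (b i 0 - (A *m x) i 0) = 0) ->
  K *m x + g + A^T *m mu = 0 ->
  forall y, feasible A b y -> y != x ->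
  2^-1 * qform x K x + dotv g x < 2^-1 * qform y K y + dotv g y.
Proof.
move=> Ks pd fx mu0 cs kkt y fy yx.
set d := y - x.
have yE : y = x + d by rewrite /d addrC subrK.
have d0 : d != 0 by rewrite subr_eq0.
have dE : d = y - x by [].
clearbody d.
have sym : qform d K x = qform x K d by rewrite -qform_tr Ks.
have e1 : qform (x + d) K (x + d) = qform x K x + 2 * qform x K d + qform d K d.
  rewrite /qform trD !mulmxDl !mulmxDr !mxaE.
  move: sym; rewrite /qform => ->; lra.
have e2 : dotv g (x + d) = dotv g x + dotv g d by rewrite /dotv mulmxDr mxaE.
have e3 : dotv g d = - qform x K d - \sum_i mu i 0 * (A *m d) i 0.
  have : dotv (K *m x + g + A^T *m mu) d = 0 by rewrite kkt /dotv trmx0 mul0mx mxE.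
  rewrite /dotv !trD !mulmxDl !mxaE.
  have -> : ((K *m x)^T *m d) 0 0 = qform x K d by rewrite /qform trmx_mul Ks.
  have -> : ((A^T *m mu)^T *m d) 0 0 = \sum_i mu i 0 * (A *m d) i 0.
    rewrite trmx_mul trmxK -mulmxA mxE; apply: eq_bigr => i _; by rewrite mxE.
  lra.
have e4 : \sum_i mu i 0 * (A *m d) i 0 <= 0.
  apply: sumr_le0 => i _.
  rewrite dE mulmxBr mxbE.
  have h1 := mu0 i; have h2 := fy i; have h3 := cs i.
  nra.
have e5 := pd d d0.
rewrite yE e2 e1.
lra.
Qed.

Unset Implicit Arguments.

Theorem lemma2 (R : realType) (n m : nat)
  (H : 'M[R]_n) (f : 'cV[R]_n) (A : 'M[R]_(m, n)) (b : 'cV[R]_m)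
  (xs : 'cV[R]_n) (lam : 'cV[R]_m) (rho : R) :
  (exists x, feasible A b x) ->
  posdef (H + H^T) ->
  AVI_sol H f A b xs ->
  row_free (rowsub (@enum_val _ (mem (active A b xs))) A) ->
  H *m xs + f + A^T *m lam = 0 ->
  (forall i, 0 <= lam i 0) ->
  (forall i, 0 <= b i 0 - (A *m xs) i 0) ->
  (forall i, lam i 0 * (b i 0 - (A *m xs) i 0) = 0) ->
  (forall i, i \in active A b xs -> 0 < lam i 0) ->
  0 < rho ->
  \forall z \near xs, AQP rho H f A b z = active A b xs.
Proof.
move=> _ Hpd _ rf kkt lam0 slack cs lampos r0.
set S := active A b xs in rf lampos *.
set e := @enum_val _ (mem S) in rf.
set B := rowsub e A in rf.
set K := Htil rho H.
have Ks : K^T = K := Htil_sym rho H.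
have Kpd : posdef K := Htil_pd r0 Hpd.
have Ku := pd_unit Kpd.
have Gu := gram_unit Kpd rf.
pose P : 'M[R]_(m, #|mem S|) := \matrix_(i, j) (e j == i)%:R.
have PTE : forall (w : 'cV[R]_m) j, (P^T *m w) j 0 = w (e j) 0.
  move=> w j; rewrite mxE (bigD1 (e j)) //= !mxE eqxx mul1r big1 ?addr0 // => i' ne.
  by rewrite !mxE eq_sym (negbTE ne) mul0r.
have PB : P^T *m A = B.
  apply/matrixP => j c; rewrite [RHS]mxE mxE (bigD1 (e j)) //= !mxE eqxx mul1r.
  rewrite big1 ?addr0 // => i' ne.
  by rewrite !mxE eq_sym (negbTE ne) mul0r.
have ATP : A^T *m P = B^T by rewrite -PB trmx_mul trmxK.
set W := K - H.
set G := B *m invmx K *m B^T.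
set M2 := invmx G *m B *m invmx K *m W.
set M1 := invmx K *m (W - B^T *m M2).
have BM1 : B *m M1 = 0.
  rewrite /M1 mulmxA mulmxBr.
  have -> : B *m invmx K *m (B^T *m M2) = G *m M2 by rewrite /G !mulmxA.
  by rewrite /M2 !mulmxA mulmxV // mul1mx subrr.
have KM1 : K *m M1 = W - B^T *m M2 by rewrite /M1 mulKVmx.
have lam_out : forall i, i \notin S -> lam i 0 = 0.
  move=> i Hi; have := cs i; move/eqP; rewrite mulf_eq0 => /orP [/eqP //|].
  by rewrite subr_eq0 eq_sym => hh; move: Hi; rewrite /S inE hh.
have P_out : forall i (v : 'cV[R]_#|mem S|), i \notin S -> (P *m v) i 0 = 0.
  move=> i v Hi; rewrite mxE big1 // => j _; rewrite mxE.
  have : e j != i by apply: contraNneq Hi => <-; exact: enum_valP.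
  by move/negbTE => ->; rewrite mul0r.
have B_in : forall i (v : 'cV[R]_n) (Hi : i \in S), (A *m v) i 0 = (B *m v) (enum_rank_in Hi i) 0.
  by move=> i v Hi; rewrite -PB -mulmxA PTE /e (enum_rankK_in Hi Hi).
have h : forall i : 'I_m, \forall z \near xs,
   0 < (if i \in S then lam i 0 + ((P *m M2) *m (z - xs)) i 0
        else (b i 0 - (A *m xs) i 0) + ((- (A *m M1)) *m (z - xs)) i 0).
  move=> i; have [Hi|Hi] := boolP (i \in S).
    exact: near_lin (lampos i Hi).

  apply: near_lin; rewrite lt_neqAle slack andbT eq_sym subr_eq0.
  by rewrite eq_sym; move: Hi; rewrite /S inE.
have hN : \forall z \near xs, forall i : 'I_m,
   0 < (if i \in S then lam i 0 + ((P *m M2) *m (z - xs)) i 0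
        else (b i 0 - (A *m xs) i 0) + ((- (A *m M1)) *m (z - xs)) i 0).
  exact: (@filter_forall _ _ (fun i (z : 'cV[R]_n) => 0 < (if i \in S then lam i 0 + ((P *m M2) *m (z - xs)) i 0
        else (b i 0 - (A *m xs) i 0) + ((- (A *m M1)) *m (z - xs)) i 0)) (nbhs xs) _ h).
apply: (filterS _ hN) => z hz.
set v := z - xs in hz *.
have zE : z = xs + v by rewrite /v addrC subrK.
clearbody v.
set xz := xs + M1 *m v.
set mu := lam + P *m (M2 *m v).
have Axz_in : forall i, i \in S -> (A *m xz) i 0 = b i 0.
  move=> i Hi; rewrite /xz mulmxDr mxaE (B_in i (M1 *m v) Hi) mulmxA BM1 mul0mx mx0E addr0.
  by apply/eqP; move: Hi; rewrite /S inE.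
have Axz_out : forall i, i \notin S -> (A *m xz) i 0 < b i 0.
  move=> i Hi; have := hz i; rewrite (negbTE Hi) mulNmx -mulmxA (mxnE (A *m (M1 *m v))) => hh.
  rewrite /xz mulmxDr mxaE; lra.
have fxz : feasible A b xz.
  move=> i; have [Hi|Hi] := boolP (i \in S); first by rewrite Axz_in.
  exact: ltW (Axz_out i Hi).
have mu0 : forall i, 0 <= mu i 0.
  move=> i; rewrite /mu mxaE; have [Hi|Hi] := boolP (i \in S).
    by move: (hz i); rewrite Hi /= -mulmxA => /ltW.
  by rewrite lam_out // P_out // addr0.
have csz : forall i, mu i 0 * (b i 0 - (A *m xz) i 0) = 0.
  move=> i; have [Hi|Hi] := boolP (i \in S).
    by rewrite Axz_in // subrr mulr0.
  by rewrite /mu mxaE lam_out // P_out // addr0 mul0r.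
have kktz : K *m xz + ftil rho H f z + A^T *m mu = 0.
  have e1 : K *m xz = K *m xs + (W *m v - B^T *m M2 *m v).
    by rewrite /xz mulmxDr mulmxA KM1 mulmxBl.
  have e2 : A^T *m mu = A^T *m lam + B^T *m M2 *m v.
    by rewrite /mu mulmxDr !mulmxA ATP.
  have e3 : ftil rho H f z = f - (W *m xs + W *m v).
    rewrite /ftil -/K zE.
    have -> : H - K = - W by rewrite /W opprB.
    by rewrite mulNmx mulmxDr.
  have e4 : K *m xs - W *m xs = H *m xs.
    by rewrite -mulmxBl /W opprB addrC subrK.
  rewrite e1 e2 e3; apply/matrixP => i j.
  move/matrixP: kkt => /(_ i j); move/matrixP: e4 => /(_ i j).
  rewrite !mxaE !mxnE !mxaE !mx0E.
  lra.
have Sxz : Sx rho H f A b z = xz.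
  rewrite /Sx; apply: xget_unique.
    split => // y fy; rewrite /QPobj -/K.
    have [->|ne] := eqVneq y xz; first exact: lexx.
    exact: ltW (kkt_strict Ks Kpd fxz mu0 csz kktz fy ne).
  move=> y [fy ymin]; apply/eqP; apply: contraT => ne.
  have := kkt_strict Ks Kpd fxz mu0 csz kktz fy ne.
  have := ymin xz fxz; rewrite /QPobj -/K => h1 h2.
  by have := lt_le_trans h2 h1; rewrite ltxx.
rewrite /AQP Sxz; apply/setP => i.
have [Hi|Hi] := boolP (i \in S).
  by rewrite inE Axz_in // eqxx.
by rewrite inE lt_eqF // Axz_out.
Qed.
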